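(* Let $d\ge1$, let $\preceq$ be a term order and let $J\subset S$ be a saturated Borel ideal which is a hilb-segment ideal w.r.t. $\preceq$ with Hilbert polynomial $p_{S/J}(z)=d$. Let $\mathcal B=\{x^\beta\in\mathbb T_d\setminus J : x_1x^\beta\in J\}$. Then $ed(\mathcal St_h(J,\preceq))\ge |G(J)|\cdot|\mathcal B|$.
   Context: $S=K[x_0,\dots,x_n]$, $K$ algebraically closed of characteristic $0$, standard grading, $x_0<x_1<\dots<x_n$; $\mathbb T_t$ is the set of terms of degree $t$; $G(J)$ is the set of minimal monomial generators of $J$. A monomial ideal is Borel if $x^\alpha\in J$, $\alpha_j>0$, $j<n$ imply $x^\alpha x_{j+1}/x_j\in J$. Given a term order, $B\subseteq\mathbb T_t$ is a segment if $\tau\in B$, $\tau'\in\mathbb T_t$, $\tau'\succ\tau$ imply $\tau'\in B$; a saturated Borel ideal with constant Hilbert polynomial $d$ is a hilb-segment ideal if $J\cap\mathbb T_d$ is a segment ($d$ being the Gotzmann number of the constant polynomial $d$). Homogeneous Gröbner stratum: $\mathcal St_h(J,\preceq)$ is the affine scheme parametrizing homogeneous ideals of $S$ whose initial ideal w.r.t. $\preceq$ is $J_{\ge d}$; explicitly, for each minimal generator $x^\alpha$ of $J_{\ge d}$ of degree $t$ one sets $F_\alpha=x^\alpha+\sum c_{\alpha\beta}x^\beta$, the sum over terms $x^\beta\in\mathbb T_t\setminus J$ with $x^\beta\prec x^\alpha$, with new variables $c_{\alpha\beta}$; the defining ideal in $K[c_{\alpha\beta}]$ is generated by the $x$-coefficients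 of the reductions of all $S$-polynomials $S(F_\alpha,F_{\alpha'})$ modulo $\{F_\alpha\}$. The point $J$ is the origin, and $ed(\mathcal St_h(J,\preceq))$ denotes the embedding dimension, i.e. the dimension of the Zariski tangent space of the stratum at the origin. *)

(* Defs.v *)
From HB Require Import structures.
From mathcomp Require Import all_boot all_order all_algebra.
Set Implicit Arguments.
Unset Strict Implicit.
Unset Printing Implicit Defensive.
Import GRing.Theory.

(* Terms (monomials) of S = K[x_0,...,x_n], as exponent vectors.       *)
Section Terms.
Variable n : nat.

Definition mon := {ffun 'I_n.+1 -> nat}.
Definition mdeg (a : mon) : nat := (\sum_(i < n.+1) a i)%N.
Definition mmul (a b : mon) : mon := [ffun i => (a i + b i)%N].
Definition mdvd (a b : mon) : bool := [forall i, a i <= b i]%N.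
Definition mquo (b a : mon) : mon := [ffun i => (b i - a i)%N].
Definition mlcm (a b : mon) : mon := [ffun i => maxn (a i) (b i)].
Definition mone : mon := [ffun => 0%N].
Definition xvar (i : 'I_n.+1) : mon := [ffun j => nat_of_bool (j == i)].

Definition mon_of_bnd t (f : {ffun 'I_n.+1 -> 'I_t.+1}) : mon :=
  [ffun i => nat_of_ord (f i)].
Definition monsOfDeg (t : nat) : seq mon :=
  [seq m <- map (@mon_of_bnd t) (enum {ffun 'I_n.+1 -> 'I_t.+1}) | mdeg m == t].

(* A monomial ideal J is given by a finite set of monomial generators G;
   x^a \in J iff some generator divides x^a. *)
Definition inJ (G : seq mon) (a : mon) : bool := has (fun g => mdvd g a) G.

Definition minimal_gens (G : seq mon) : Prop :=
  uniq G /\ (forall g h, g \in G -> h \in G -> mdvd g h -> g = h).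

(* Borel-fixed (strongly stable) w.r.t. x_0 < x_1 < ... < x_n. *)
Definition borel (G : seq mon) : Prop :=
  forall (a : mon) (j : 'I_n.+1), (j < n)%N -> inJ G a -> (0 < a j)%N ->
    inJ G (mmul (mquo a (xvar j)) (xvar (inord j.+1))).

(* Saturated: J = J : m^infty. *)
Definition saturated (G : seq mon) : Prop :=
  forall a : mon,
    (exists k, forall g : mon, mdeg g = k -> inJ G (mmul a g)) -> inJ G a.

Definition hilbFun (G : seq mon) (t : nat) : nat :=
  count (fun m => ~~ inJ G m) (monsOfDeg t).
Definition hilbPolyConst (G : seq mon) (d : nat) : Prop :=
  exists t0, forall t, (t0 <= t)%N -> hilbFun G t = d.

Definition term_order (le : rel mon) : Prop :=
  [/\ reflexive le, antisymmetric le, transitive le, total le &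
      (forall a b c, le a b -> le (mmul a c) (mmul b c))] /\
  (forall a, le mone a).
Definition tlt (le : rel mon) (a b : mon) : bool := le a b && (a != b).

(* hilb-segment: J \cap T_d is a segment (d = Gotzmann number of the constant d). *)
Definition hilb_segment (le : rel mon) (G : seq mon) (d : nat) : Prop :=
  forall a b : mon, mdeg a = d -> mdeg b = d -> inJ G a -> le a b -> inJ G b.

Definition Bset (G : seq mon) (d : nat) : seq mon :=
  [seq b <- monsOfDeg d | ~~ inJ G b && inJ G (mmul (xvar (inord 1)) b)].

(* The minimal generators of J_{>=d} have degree <= max(d, max deg G), *)
(* so all a, b involved have exponents bounded by Dbnd below; we index *)
(* them by the finite type BM (this only serves to make the index set  *)
(* of the variables c_{ab} a finite type).                             *)
Definition Dbnd (G : seq mon) (d : nat) : nat := (d + \sum_(g <- G) mdeg g)%N.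
Definition BM (G : seq mon) (d : nat) := {ffun 'I_n.+1 -> 'I_(Dbnd G d).+1}.
Definition bm G d (f : BM G d) : mon := mon_of_bnd f.

Definition isGen (G : seq mon) (d : nat) (a : BM G d) : bool :=
  [&& inJ G (bm a), (d <= mdeg (bm a))%N &
      [forall b : BM G d, (mdvd (bm b) (bm a) && (bm b != bm a)) ==>
                           ~~ (inJ G (bm b) && (d <= mdeg (bm b))%N)]].

(* (a,b) indexes a variable c_{ab}: x^a minimal generator of J_{>=d},
   x^b in T_{deg a} \ J, x^b < x^a. *)
Definition isVar (le : rel mon) (G : seq mon) (d : nat) (p : BM G d * BM G d) : bool :=
  [&& isGen p.1, mdeg (bm p.2) == mdeg (bm p.1), ~~ inJ G (bm p.2) &
      tlt le (bm p.2) (bm p.1)].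

Definition Var (le : rel mon) (G : seq mon) (d : nat) := {p : BM G d * BM G d | isVar le p}.
Definition nvars (le : rel mon) (G : seq mon) (d : nat) : nat := #|{: Var le G d}|.

(* Polynomials of S with coefficients in a ring R: coefficient functions. *)
Definition xshift (R : nzRingType) (c : R) (dl : mon) (P : mon -> R) : mon -> R :=
  fun m => if mdvd dl m then (c * P (mquo m dl))%R else 0%R.

Section Reduction.
Variables (R : nzRingType) (G : seq mon) (d : nat) (F : BM G d -> mon -> R).

(* H reduces (in finitely many steps) to H' modulo the marked family
   {F_a : a minimal generator of J_{>=d}} (head term of F_a is x^a):
   a step replaces H by H - (coeff of x^m in H) x^(m-a) F_a, x^a | x^m. *)
Inductive reduces : (mon -> R) -> (mon -> R) -> Prop :=
| red_refl H : reduces H H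
| red_step H (a : BM G d) (m : mon) H' :
    isGen a -> mdvd (bm a) m ->
    reduces (fun m' => (H m' - xshift (H m) (mquo m (bm a)) (F a) m')%R) H' ->
    reduces H H'.

Definition reduced (H : mon -> R) : Prop :=
  forall m, inJ G m -> (d <= mdeg m)%N -> H m = 0%R.
End Reduction.

Section Tangent.
Variables (K : fieldType) (le : rel mon) (G : seq mon) (d : nat).

(* F_a specialised at c = eps * v, with K[eps] realised inside {poly K}. *)
Definition markedF (v : 'rV[K]_(nvars le G d)) (a : BM G d) : mon -> {poly K} :=
  fun m => ((m == bm a)%:R +
     \sum_(x : Var le G d | ((sval x).1 == a) && (bm (sval x).2 == m))
        (v 0 (enum_rank x))%:P * 'X)%R.

Definition Spoly (v : 'rV[K]_(nvars le G d)) (a a' : BM G d) : mon -> {poly K} :=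
  let L := mlcm (bm a) (bm a') in
  fun m => (xshift 1 (mquo L (bm a)) (markedF v a) m -
            xshift 1 (mquo L (bm a')) (markedF v a') m)%R.

(* v is a Zariski tangent vector of St_h(J,le) at the origin: every
   generator g of the defining ideal (an x-coefficient of a complete
   reduction of an S-polynomial) has vanishing differential at 0 in
   direction v, i.e. g(eps v) has zero eps-coefficient. *)
Definition tangentVec (v : 'rV[K]_(nvars le G d)) : Prop :=
  forall a a' : BM G d, isGen a -> isGen a' -> a != a' ->
  forall H : mon -> {poly K},
    reduces (markedF v) (Spoly v a a') H -> reduced G d H ->
    forall m, ((H m)`_1 = 0)%R.
End Tangent.

End Terms.

(* Main.v *)
Require Import Defs.
From HB Require Import structures.
From mathcomp Require Import all_boot all_order all_algebra.
From mathcomp Require Import zify.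
Set Implicit Arguments. Unset Strict Implicit. Unset Printing Implicit Defensive.

Module AM.

Section Mon.
Variable n : nat.
Implicit Types (a b c m g h : mon n).

Definition ev (f : mon n) (i : 'I_n.+1) : nat := f i.
Lemma evE (f : mon n) i : f i = ev f i. Proof. by []. Qed.

Lemma mdvdP a b : reflect (forall i, a i <= b i) (mdvd a b).
Proof. exact: forallP. Qed.

Lemma mdvd_trans a b c : mdvd a b -> mdvd b c -> mdvd a c.
Proof. move=> /mdvdP H1 /mdvdP H2; apply/mdvdP=> i; exact: leq_trans (H1 i) (H2 i). Qed.

Lemma mdvd_refl a : mdvd a a.
Proof. by apply/mdvdP. Qed.

Lemma inJ_dvd G a b : inJ G a -> mdvd a b -> inJ G b.
Proof. move=> /hasP [g gG ga] ab; apply/hasP; exists g => //; exact: mdvd_trans ga ab. Qed.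

Lemma mdegD a b : mdeg (mmul a b) = mdeg a + mdeg b.
Proof. by rewrite /mdeg -big_split; apply: eq_bigr => i _; rewrite ffunE. Qed.

Lemma mdvd_mul a b : mdvd a b -> mmul a (mquo b a) = b.
Proof. move=> /mdvdP H; apply/ffunP=> i; rewrite !ffunE; by rewrite subnKC. Qed.

Lemma mdeg_dvd a b : mdvd a b -> mdeg a <= mdeg b.
Proof. move=> /mdvd_mul <-; rewrite mdegD; exact: leq_addr. Qed.

Lemma mdeg0 a : mdeg a = 0 -> forall i, a i = 0.
Proof.
move=> H i; apply/eqP; rewrite -leqn0 -H /mdeg (bigD1 i) //=; exact: leq_addr.
Qed.

Lemma mexp_le a i : a i <= mdeg a.
Proof. by rewrite /mdeg (bigD1 i) //=; exact: leq_addr. Qed.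

Lemma mdeg_dvd_lt a b : mdvd a b -> a != b -> mdeg a < mdeg b.
Proof.
move=> ab neq; rewrite -(mdvd_mul ab) mdegD -[X in X < _]addn0 ltn_add2l lt0n.
apply/eqP=> /mdeg0 H; move/eqP: neq; apply; apply/ffunP=> i.
move/mdvdP: ab => /(_ i); have := H i; rewrite ffunE => h1 h2; apply/eqP; rewrite eqn_leq h2 /= -subn_eq0 h1 //.
Qed.

Lemma mdeg_pos a : 0 < mdeg a -> exists i, 0 < a i.
Proof.
move=> H; apply/existsP; apply: contraLR H; rewrite negb_exists => /forallP H.
rewrite lt0n negbK /mdeg big1 // => i _; have := H i; lia.
Qed.

Lemma xvarE (i j : 'I_n.+1) : xvar i j = (j == i).
Proof. by rewrite ffunE. Qed.

Lemma mdeg_xvar (i : 'I_n.+1) : mdeg (xvar i) = 1.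
Proof.
rewrite /mdeg (bigD1 i) //= xvarE eqxx big1 // => j /negbTE; by rewrite xvarE => ->.
Qed.

Lemma addn_eq1 x y : 0 < x -> x + y = 1 -> x = 1 /\ y = 0.
Proof. lia. Qed.

Lemma mdeg1 a : mdeg a = 1 -> exists i, a = xvar i.
Proof.
move=> H; have [i ai] : exists i, 0 < a i by apply: mdeg_pos; rewrite H.
exists i; move: H; rewrite /mdeg (bigD1 i) //= => H.
have [a1 H2] := addn_eq1 ai H.
apply/ffunP=> j; rewrite xvarE; case: eqP => [->|/eqP ne]; first by rewrite a1.
apply/eqP; rewrite -leqn0 -H2 (bigD1 j) //=; exact: leq_addr.
Qed.

Lemma mquo_mul a b : mquo (mmul a b) a = b.
Proof. by apply/ffunP=> i; rewrite !ffunE !evE; lia. Qed.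

Lemma mmulC a b : mmul a b = mmul b a.
Proof. by apply/ffunP=> i; rewrite !ffunE addnC. Qed.

Lemma mdvd_mull a b : mdvd a (mmul a b).
Proof. by apply/mdvdP=> i; rewrite ffunE leq_addr. Qed.

Lemma quo_eq b m m' : mdvd b m -> mdvd (mquo m b) m' -> mquo m' (mquo m b) = b -> m' = m.
Proof.
move=> /mdvdP H1 /mdvdP H2 /ffunP H3; apply/ffunP=> i.
have := H1 i; have := H2 i; have := H3 i; rewrite !ffunE !evE; lia.
Qed.

Lemma quo_self b m : mdvd b m -> mdvd (mquo m b) m /\ mquo m (mquo m b) = b.
Proof.
move=> /mdvdP H; split; first by apply/mdvdP=> i; rewrite ffunE !evE; lia.
apply/ffunP=> i; rewrite !ffunE; have := H i; rewrite !evE; lia.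
Qed.

End Mon.

Section Lcm.
Variable n : nat.
Implicit Types (a b c m L : mon n).
Lemma mdvd_lcml a b : mdvd a (mlcm a b).
Proof. by apply/mdvdP=> i; rewrite ffunE leq_maxl. Qed.
Lemma mdvd_lcmr a b : mdvd b (mlcm a b).
Proof. by apply/mdvdP=> i; rewrite ffunE leq_maxr. Qed.
Lemma mlcmC a b : mlcm a b = mlcm b a.
Proof. by apply/ffunP=> i; rewrite !ffunE maxnC. Qed.
Lemma quo_iff b L m : mdvd b L -> (mdvd (mquo L b) m && (mquo m (mquo L b) == b)) = (m == L).
Proof.
move=> bL; apply/idP/eqP => [/andP[h1 /eqP h2]|->]; first exact: quo_eq bL h1 h2.
by have [-> ->] := quo_self bL; rewrite eqxx.
Qed.
End Lcm.

End AM.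
Import AM.

Module BM_.

Section Ideal.
Variables (n : nat) (G : seq (mon n)).
Hypothesis G_min : minimal_gens G.
Hypothesis J_borel : borel G.
Hypothesis J_sat : saturated G.
Implicit Types (a b c m g h : mon n).

Lemma inord_val (k : nat) : k <= n -> nat_of_ord (inord k : 'I_n.+1) = k.
Proof. move=> H; exact: inordK. Qed.

Lemma borel_chain h k0 k : inJ G (mmul h (xvar (inord k0))) -> k0 <= k <= n ->
  inJ G (mmul h (xvar (inord k))).
Proof.
move=> H0; elim: k => [|k IH] /andP[h1 h2].
  by move: h1; rewrite leqn0 => /eqP <-.
move: h1; rewrite leq_eqVlt => /orP[/eqP <- //|]; rewrite ltnS => h1.
have Hk : inJ G (mmul h (xvar (inord k))) by apply: IH; rewrite h1 /= ltnW.
have := J_borel (j := inord k) _ Hk.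
rewrite inord_val ?(ltnW h2) // => /(_ h2).
rewrite ffunE xvarE eqxx addn1 => /(_ isT).
by rewrite [mmul h (xvar (inord k))]mmulC mquo_mul.
Qed.

Lemma mdvd_gen g : g \in G -> inJ G g.
Proof. move=> gG; apply/hasP; exists g => //; exact: mdvd_refl. Qed.

Lemma gen_free0 g : g \in G -> g (inord 0) = 0.
Proof.
move=> gG; apply/eqP; apply/negPn/negP; rewrite -lt0n => g0.
pose h := mquo g (xvar (inord 0)).
have hg : mmul h (xvar (inord 0)) = g.
  apply/ffunP=> i; rewrite !ffunE; case: eqP => [->|_] /=; move: g0; rewrite !evE; lia.
have Hall : forall i : 'I_n.+1, inJ G (mmul h (xvar i)).
  move=> i; have -> : i = inord i by apply/val_inj; rewrite /= inordK // -ltnS.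
  apply: (borel_chain (k0 := 0)); first by rewrite hg mdvd_gen.
  by rewrite leq0n /= -ltnS.
have hJ : inJ G h.
  apply: J_sat; exists 1 => e /mdeg1 [i ->]; exact: Hall.
case/hasP: hJ => g' g'G g'h.
have g'g : mdvd g' g by rewrite -hg; exact: mdvd_trans g'h (mdvd_mull _ _).
case: G_min => _ /(_ g' g g'G gG g'g) eg.
move: g'h; rewrite eg => /mdvdP /(_ (inord 0)); rewrite !ffunE eqxx /=; move: g0; rewrite !evE; lia.
Qed.

End Ideal.

End BM_.
Import BM_.

Module CM.

Section Count.
Variables (n : nat).
Implicit Types (a b c m g h : mon n).

Lemma mem_monsOfDeg m t : (m \in monsOfDeg n t) = (mdeg m == t).
Proof.
rewrite mem_filter; case E: (mdeg m == t) => //=.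
apply/mapP; exists [ffun i => inord (m i)]; first by rewrite mem_enum.
apply/ffunP=> i; rewrite !ffunE inordK // ltnS -(eqP E); exact: mexp_le.
Qed.

Lemma count_ge (p : pred (mon n)) (s : seq (mon n)) t : uniq s ->
  (forall m, m \in s -> mdeg m = t /\ p m) -> size s <= count p (monsOfDeg n t).
Proof.
move=> us H; rewrite -size_filter; apply: uniq_leq_size => // m ms.
by case: (H m ms) => h1 h2; rewrite mem_filter h2 mem_monsOfDeg h1 eqxx.
Qed.

Definition dec m : mon n :=
  if [pick j | 0 < m j] is Some j then mquo m (xvar j) else m.

Lemma dec_dvd m : mdvd (dec m) m.
Proof.
rewrite /dec; case: pickP => [j _|_]; last exact: mdvd_refl.
by apply/mdvdP=> i; rewrite ffunE leq_subr.
Qed.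

Lemma dec_deg m : mdeg (dec m) = (mdeg m).-1.
Proof.
rewrite /dec; case: pickP => [j hj|H].
  have dv : mdvd (xvar j) m.
    apply/mdvdP=> i; rewrite ffunE; case: eqP => [->|] //=.
  by rewrite -{2}(mdvd_mul dv) mdegD mdeg_xvar.
have -> : mdeg m = 0.
  by rewrite /mdeg big1 // => i _; apply/eqP; move: (H i); rewrite lt0n => /negbT; rewrite negbK.
done.
Qed.

Lemma iter_dec_dvd k m : mdvd (iter k dec m) m.
Proof.
elim: k => [|k IH] /=; first exact: mdvd_refl.
exact: mdvd_trans (dec_dvd _) IH.
Qed.

Lemma iter_dec_deg k m : mdeg (iter k dec m) = mdeg m - k.
Proof. elim: k => [|k IH] /=; first by rewrite subn0. by rewrite dec_deg IH subnS. Qed.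

Definition x0pow (e : nat) : mon n := [ffun j => if j == inord 0 then e else 0].

Lemma mdeg_x0pow e : mdeg (x0pow e) = e.
Proof.
rewrite /mdeg (bigD1 (inord 0)) //= big1 ?ffunE ?eqxx ?addn0 // => j /negbTE.
by rewrite ffunE => ->.
Qed.

Variable G : seq (mon n).
Hypothesis G_min : minimal_gens G.
Hypothesis J_borel : borel G.
Hypothesis J_sat : saturated G.

Lemma gen_deg_hilb al t : al \in G -> mdeg al <= t -> mdeg al <= hilbFun G t.
Proof.
move=> alG Dt; set D := mdeg al.
have [D0|Dpos] := posnP D; first by rewrite D0.
have [i ai] := mdeg_pos Dpos.
have al0 := gen_free0 G_min J_borel J_sat alG.
have i0 : i != inord 0 by apply/eqP=> e; move: ai; rewrite e al0.
set gam := mquo al (xvar i).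
have dgam : mdvd (xvar i) al by apply/mdvdP=> j; rewrite ffunE; case: eqP => [->|] //.
have gdeg : mdeg gam = D.-1 by rewrite /D -(mdvd_mul dgam) mdegD mdeg_xvar.
pose del k := iter k dec gam.
pose mu k := mmul (del k) (x0pow (t - mdeg (del k))).
have del0 k : del k (inord 0) = 0.
  have /mdvdP/(_ (inord 0)) := iter_dec_dvd k gam.
  by rewrite ffunE al0 leqn0 => /eqP.
have mu0 k : k < D -> mu k (inord 0) = t - (D.-1 - k).
  by move=> kD; rewrite !ffunE eqxx del0 add0n iter_dec_deg gdeg.
have -> : D = size (map mu (iota 0 D)) by rewrite size_map size_iota.
rewrite /hilbFun; apply: count_ge.
  rewrite map_inj_in_uniq ?iota_uniq // => k k'; rewrite !mem_iota !add0n => kD k'D.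
  move=> /ffunP/(_ (inord 0)); rewrite mu0 // mu0 //.
  move: kD k'D Dt Dpos; lia.
move=> m /mapP [k]; rewrite mem_iota add0n => kD ->; split.
  rewrite mdegD mdeg_x0pow subnKC // iter_dec_deg gdeg; lia.
apply/hasP=> [[g gG gm]].
have gal : mdvd g al.
  apply/mdvdP=> j; case: (eqVneq j (inord 0)) => [->|jne].
    by rewrite (gen_free0 G_min J_borel J_sat gG).
  move/mdvdP: gm => /(_ j); rewrite !ffunE (negbTE jne) addn0 => h.
  apply: leq_trans h _.
  move/mdvdP: (iter_dec_dvd k gam) => /(_ j); rewrite ffunE => h2.
  by apply: leq_trans h2 _; rewrite leq_subr.
have ega : g = al by case: G_min => _ /(_ g al gG alG gal).
move/mdvdP: gm => /(_ i); rewrite ega !ffunE (negbTE i0) addn0 => h.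
move/mdvdP: (iter_dec_dvd k gam) => /(_ i); rewrite ffunE xvarE eqxx /= => h2.
move: h h2 ai; rewrite /del !evE; lia.
Qed.

Lemma gen_deg d al : hilbPolyConst G d -> al \in G -> mdeg al <= d.
Proof.
move=> [t0 Ht] alG; rewrite -(Ht (maxn t0 (mdeg al))) ?leq_maxl //.
by apply: gen_deg_hilb => //; rewrite leq_maxr.
Qed.

End Count.

Lemma mon_of_bnd_inj n t : injective (@mon_of_bnd n t).
Proof.
move=> u w /ffunP e; apply/ffunP=> i; apply/val_inj; have := e i; rewrite !ffunE; exact.
Qed.

Lemma monsOfDeg_uniq n t : uniq (monsOfDeg n t).
Proof.
rewrite /monsOfDeg; apply: filter_uniq; rewrite (map_inj_uniq (@mon_of_bnd_inj n t)).
exact: enum_uniq.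
Qed.

Lemma Bset_uniq n (G : seq (mon n)) d : uniq (Bset G d).
Proof. rewrite /Bset; apply: filter_uniq; exact: monsOfDeg_uniq. Qed.

End CM.
Import CM.

Module DM.
Import GRing.Theory.
Local Open Scope ring_scope.

Lemma coef0M' (K : fieldType) (p q : {poly K}) : (p * q)`_0 = (p`_0 * q`_0)%R.
Proof. by rewrite coefM big_ord_recr big_ord0 /= add0r. Qed.

Lemma coef1M' (K : fieldType) (p q : {poly K}) : (p * q)`_1 = (p`_0 * q`_1 + p`_1 * q`_0)%R.
Proof. by rewrite coefM !big_ord_recr big_ord0 /= add0r. Qed.

Section Tan.
Variables (n : nat) (K : fieldType) (le : rel (mon n)) (G : seq (mon n)) (d : nat).
Variable x0 : Var le G d.
Let N := nvars le G d.
Let v : 'rV[K]_N := delta_mx 0 (enum_rank x0).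
Let F := markedF (K := K) v.
Let J m := inJ G m && (d <= mdeg m)%N.

Lemma F0 c m : (F c m)`_0 = ((m == bm c)%:R).
Proof.
rewrite /F /markedF coefD coef_sum big1 ?addr0.
  by rewrite -polyC_natr coefC.
by move=> x _; rewrite coefMX.
Qed.

Lemma F1 c m : (F c m)`_1 != 0%R -> c = (sval x0).1 /\ m = bm (sval x0).2.
Proof.
rewrite /F /markedF coefD -polyC_natr coefC /= add0r coef_sum.
move=> Hs; suff /andP[/eqP -> /eqP ->] : (c == (sval x0).1) && (m == bm (sval x0).2) by [].
move: Hs; apply: contraTT => H; rewrite negbK; apply/eqP; apply: big1 => x /andP[/eqP e1 /eqP e2].
rewrite coefMX /= coefC /= /v mxE eqxx /=.
case: eqP => // /enum_rank_inj ex; rewrite -ex in H.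
by move: H; rewrite e1 e2 !eqxx.
Qed.

Lemma red_inv (S : mon n -> {poly K}) H H' : reduces F H H' ->
  (forall m, (H m)`_0 = 0%R) ->
  (forall m, ~~ J m -> (H m)`_1 = (S m)`_1) ->
  (forall m, ~~ J m -> (H' m)`_1 = (S m)`_1).
Proof.
elim=> {H H'} [H|H a m H' ga am red IH] // h0 h1.
apply: IH.
  move=> m'; rewrite coefB /xshift; case: ifP => _; last by rewrite coef0 subr0.
  by rewrite coef0M' !h0 mul0r subr0.
move=> m' Jm'; rewrite coefB /xshift -h1 //; case: ifP => dv; last by rewrite coef0 subr0.
rewrite coef1M' h0 mul0r add0r F0.
case: eqP => [e|_]; last by rewrite mulr0 subr0.
have em := quo_eq am dv e.
exfalso; move: Jm'; rewrite em /J; apply/negP/negPn.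
move: ga; rewrite /isGen => /and3P[ja da _].
by rewrite (inJ_dvd ja am) /= (leq_trans da) // mdeg_dvd.
Qed.

Hypothesis key : forall a a' : BM G d, isGen a -> isGen a' -> a != a' -> a = (sval x0).1 ->
  forall m, mdvd (mquo (mlcm (bm a) (bm a')) (bm a)) m ->
  mquo m (mquo (mlcm (bm a) (bm a')) (bm a)) = bm (sval x0).2 -> J m.

Lemma xs_const c L m : mdvd (bm c) L ->
  (xshift 1 (mquo L (bm c)) (F c) m)`_0 = ((m == L)%:R).
Proof.
move=> cL; rewrite /xshift -(quo_iff m cL).
by case: ifP => dv /=; rewrite ?coef0 // mul1r F0.
Qed.

Lemma tangent : tangentVec v.
Proof.
move=> a a' ga ga' neq H red redH m.
have S0 : forall m, (Spoly v a a' m)`_0 = 0.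
  by move=> m'; rewrite /Spoly coefB xs_const ?mdvd_lcml // xs_const ?mdvd_lcmr // subrr.
have S1 : forall m, ~~ J m -> (Spoly v a a' m)`_1 = 0.
  move=> m' Jm'; rewrite /Spoly coefB /xshift.
  have T1 : forall b b' : BM G d, isGen b -> isGen b' -> b != b' ->
      (if mdvd (mquo (mlcm (bm b) (bm b')) (bm b)) m'
       then 1 * F b (mquo m' (mquo (mlcm (bm b) (bm b')) (bm b))) else 0)`_1 = 0.
    move=> b b' gb gb' nb; case: ifP => dv; last by rewrite coef0.
    rewrite mul1r; apply/eqP/negPn/negP => /F1 [e1 e2].
    by exfalso; move/negP: Jm'; apply; exact: key gb gb' nb e1 _ dv e2.
  rewrite T1 // mlcmC T1 ?subrr // eq_sym //.
case Jm: (J m).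
  by move: Jm => /andP[j dm]; rewrite redH // coef0.
by rewrite (@red_inv (Spoly v a a') _ _ red S0 (fun _ _ => erefl)) ?Jm // S1 ?Jm.
Qed.

End Tan.

End DM.
Import DM.

Module E1M.
Import GRing.Theory.
Local Open Scope ring_scope.

Lemma dim_delta (K : fieldType) N (s : seq 'I_N) (T : {vspace 'rV[K]_N}) :
  uniq s -> (forall i, i \in s -> delta_mx 0 i \in T) -> (size s <= \dim T)%N.
Proof.
case: s => [//|j0 s'] us sT; set s := j0 :: s' in us sT *; pose X := [seq delta_mx 0 i : 'rV[K]_N | i <- s].
have fX : free X.
  apply/(@freeP _ _ _ (in_tuple X)) => k Hk i.
  have ilt : (i < size s)%N by rewrite -(size_map (fun i => delta_mx 0 i : 'rV[K]_N)); exact: ltn_ord.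
  have := congr1 (fun M : 'rV[K]_N => M 0 (nth j0 s i)) Hk.
  rewrite /= summxE mxE (bigD1 i) //= big1 ?addr0.
    rewrite mxE (nth_map j0) // mxE !eqxx mulr1 => ->; done.
  move=> j ji; rewrite mxE (nth_map j0) ?mxE /=; last by rewrite -(size_map (fun i => delta_mx 0 i : 'rV[K]_N)).
  rewrite (nth_uniq j0) //; last by rewrite -(size_map (fun i => delta_mx 0 i : 'rV[K]_N)).
  case: eqP => [/val_inj e|_]; last by rewrite mulr0.
  by move: ji; rewrite e eqxx.
have sub : (<<X>> <= T)%VS by apply/span_subvP => u /mapP [i si ->]; exact: sT.
by rewrite -(size_map (fun i => delta_mx 0 i : 'rV[K]_N)) -(eqP fX) dimvS.
Qed.

End E1M.
Import E1M.

Module EM.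

Lemma pmap_props (A B : eqType) (f : A -> option B) s : uniq s ->
  (forall x, x \in s -> f x) -> {in s &, forall x y, f x = f y -> x = y} ->
  uniq (pmap f s) /\ size (pmap f s) = size s.
Proof.
elim: s => [|x s IH] //= /andP[xs us] hS hI.
have sub : {subset s <= x :: s} by move=> z zs; rewrite inE zs orbT.
have [u s' ] := IH us (fun y ys => hS y (sub _ ys))
  (fun y z ys zs => hI y z (sub _ ys) (sub _ zs)).
have := hS x (mem_head _ _); case E: (f x) => [u0|] //= _.
split; last by rewrite s'.
rewrite u andbT mem_pmap; apply/negP => /mapP [y ys fy].
have exy := hI x y (mem_head _ _) (sub _ ys); rewrite E fy in exy.
by move: xs; rewrite (exy erefl) ys.
Qed.

Lemma aux_max x y b : x < y -> b + 1 <= maxn x y - x + b.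
Proof. lia. Qed.

Section Main.
Variables (n : nat) (d : nat) (le : rel (mon n)) (G : seq (mon n)).
Hypothesis n_ge1 : (0 < n).
Hypothesis le_term : term_order le.
Hypothesis G_min : minimal_gens G.
Hypothesis J_borel : borel G.
Hypothesis J_sat : saturated G.
Hypothesis J_hilb : hilbPolyConst G d.
Hypothesis J_seg : hilb_segment le G d.
Implicit Types (a b m al be : mon n).

Definition aof al : mon n := mmul al (x0pow n (d - mdeg al)).
Definition toBM m : BM G d := [ffun i => inord (m i)].

Lemma bm_toBM m : mdeg m <= Dbnd G d -> bm (toBM m) = m.
Proof.
move=> h; apply/ffunP=> i; rewrite !ffunE inordK // ltnS.
exact: leq_trans (mexp_le _ _) h.
Qed.

Lemma bm_inj : injective (@bm n G d).
Proof.
move=> f g /ffunP e; apply/ffunP=> i; apply/val_inj; have := e i; rewrite !ffunE //.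
Qed.

Lemma mdeg_aof al : al \in G -> mdeg (aof al) = d.
Proof.
move=> alG; rewrite mdegD mdeg_x0pow subnKC //; exact: gen_deg J_hilb alG.
Qed.

Lemma Bset_prop be : be \in Bset G d ->
  [/\ mdeg be = d, ~~ inJ G be & inJ G (mmul (xvar (inord 1)) be)].
Proof.
rewrite mem_filter mem_monsOfDeg => /andP[/andP[h1 h2] /eqP h3]; done.
Qed.

Lemma deg_le_D m : mdeg m = d -> mdeg m <= Dbnd G d.
Proof. by move=> ->; rewrite leq_addr. Qed.

Lemma isGen_min (c b : BM G d) : isGen c -> mdvd (bm b) (bm c) -> bm b != bm c ->
  ~~ (inJ G (bm b) && (d <= mdeg (bm b))).
Proof.
by case/and3P=> _ _ /forallP /(_ b) /implyP H h1 h2; apply: H; rewrite h1 h2.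
Qed.

Lemma aof_gen al : al \in G -> isGen (toBM (aof al)).
Proof.
move=> alG; have da := mdeg_aof alG.
rewrite /isGen bm_toBM ?deg_le_D // da leqnn /=; apply/andP; split.
  apply: inJ_dvd (mdvd_gen alG) _; exact: mdvd_mull.
apply/forallP=> b; apply/implyP=> /andP[h1 h2].
by rewrite negb_and -ltnNge orbC -[X in _ < X]da (mdeg_dvd_lt h1 h2).
Qed.

Lemma pair_var al be : al \in G -> be \in Bset G d ->
  isVar le (toBM (aof al), toBM be).
Proof.
move=> alG beB; have [db nbe jbe] := Bset_prop beB; have da := mdeg_aof alG.
rewrite /isVar /= aof_gen //= !bm_toBM ?deg_le_D // db da eqxx nbe /=.
have ja : inJ G (aof al) by apply: inJ_dvd (mdvd_gen alG) _; exact: mdvd_mull.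
rewrite /tlt; case: le_term => [[_ _ _ tot _] _].
have nle : ~~ le (aof al) be by apply/negP=> h; move/negP: nbe; apply; exact: J_seg h.
have -> : le be (aof al) by move: (tot be (aof al)); rewrite (negbTE nle) orbF.
by apply/eqP=> e; move: nbe; rewrite e ja.
Qed.

Lemma aof0 al : al \in G -> forall i, i != inord 0 -> aof al i = al i.
Proof. by move=> alG i ni; rewrite !ffunE (negbTE ni) addn0. Qed.

Lemma key_lemma al be (alG : al \in G) (beB : be \in Bset G d) (a a' : BM G d) :
  isGen a -> isGen a' -> a != a' -> a = toBM (aof al) ->
  forall m, mdvd (mquo (mlcm (bm a) (bm a')) (bm a)) m ->
  mquo m (mquo (mlcm (bm a) (bm a')) (bm a)) = bm (toBM be) ->
  inJ G m && (d <= mdeg m).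
Proof.
move=> ga ga' neq ea m dv e.
have [db nbe jbe] := Bset_prop beB.
rewrite bm_toBM ?deg_le_D // in e.
have eA : bm a = aof al by rewrite ea bm_toBM // deg_le_D // mdeg_aof.
have em : m = mmul (mquo (mlcm (bm a) (bm a')) (bm a)) be by rewrite -e mdvd_mul.
have neqb : bm a != bm a' by apply: contra neq => /eqP /bm_inj ->.
have al0 := gen_free0 G_min J_borel J_sat alG.
have [ja da _] := and3P ga; have [ja' da' _] := and3P ga'.
apply/andP; split; last by rewrite em mdegD db leq_addl.
have step1 : [exists j, bm a j < bm a' j].
  apply: contraT; rewrite negb_exists => /forallP H.
  have dv' : mdvd (bm a') (bm a) by apply/mdvdP=> j; move: (H j); rewrite -leqNgt.
  have := isGen_min ga dv'; rewrite eq_sym neqb => /(_ isT); by rewrite ja' da'.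
have [/existsP [j /andP [jpos lt]]|nj] := boolP [exists j : 'I_n.+1, (0 < j) && (bm a j < bm a' j)].
  have jbe' : inJ G (mmul be (xvar j)).
    have -> : j = inord j by apply/val_inj; rewrite /= inordK.
    apply: (borel_chain J_borel (k0 := 1)); first by rewrite mmulC.
    by rewrite jpos -ltnS ltn_ord.
  apply: inJ_dvd jbe' _; rewrite em; apply/mdvdP=> i; rewrite !ffunE.
  case: eqP => [->|_] /=; last by rewrite addn0 leq_addl.
  by move: lt; rewrite !ffunE; apply: aux_max.
exfalso.
have {}nj : forall i : 'I_n.+1, 0 < i -> bm a' i <= bm a i.
  move=> i ipos; move: nj; rewrite negb_exists => /forallP /(_ i); rewrite ipos /= -leqNgt //.
case/existsP: step1 => j lt.
have j0 : j = inord 0.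
  apply/val_inj; rewrite /= inordK //; apply/eqP; rewrite -leqn0 leqNgt; apply/negP => jp.
  by move: (nj j jp); rewrite leqNgt lt.
case/hasP: ja' => g gG ga'g.
have g0 := gen_free0 G_min J_borel J_sat gG.
have gal : mdvd g al.
  apply/mdvdP=> i; case: (eqVneq i (inord 0)) => [->|ni]; first by rewrite g0.
  move/mdvdP: ga'g => /(_ i) h; apply: leq_trans h _; rewrite -(aof0 alG ni) -eA nj //.
  by rewrite lt0n; apply: contra ni => /eqP e0; apply/eqP/val_inj; rewrite /= inordK.
have ega : g = al by case: G_min => _ /(_ g al gG alG gal).
have dvA : mdvd (bm a) (bm a').
  apply/mdvdP=> i; case: (eqVneq i (inord 0)) => [->|ni]; first by rewrite -j0 ltnW.
  by rewrite eA (aof0 alG ni) -ega; move/mdvdP: ga'g; apply.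
by have := isGen_min ga' dvA neqb; rewrite ja da.
Qed.

End Main.


End EM.
Import EM.

Theorem mainTheorem14
  (K : closedFieldType) (charK0 : [pchar K]%R =i pred0)
  (n : nat) (n_ge1 : (0 < n)%N)
  (d : nat) (d_ge1 : (1 <= d)%N)
  (le : rel (mon n)) (le_term : term_order le)
  (G : seq (mon n)) (G_min : minimal_gens G)
  (J_borel : borel G) (J_sat : saturated G)
  (J_hilb : hilbPolyConst G d) (J_seg : hilb_segment le G d)
  (T : {vspace 'rV[K]_(nvars le G d)})
  (T_tangent : forall v, v \in T <-> @tangentVec n K le G d v) :
  (size G * size (Bset G d) <= \dim T)%N.
Proof.
pose ps := [seq (x, y) | x <- G, y <- Bset G d].
pose f (p : mon n * mon n) : option 'I_(nvars le G d) :=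
  if (insub (toBM d G (aof d p.1), toBM d G p.2) : option (Var le G d)) is Some x
  then Some (enum_rank x) else None.
have psP : forall p, p \in ps -> p.1 \in G /\ p.2 \in Bset G d.
  by move=> p /allpairsP [[x y] [h1 h2 ->]].
have fS : forall p, p \in ps -> exists2 x : Var le G d, f p = Some (enum_rank x) &
    sval x = (toBM d G (aof d p.1), toBM d G p.2).
  move=> p /psP [h1 h2]; rewrite /f insubT; first exact: (pair_var le_term G_min J_borel J_sat J_hilb J_seg).
  by move=> Hv; exists (exist (fun q => isVar le q) _ Hv).
have uB := Bset_uniq G d.
have ups : uniq ps.
  apply: allpairs_uniq; [by case: G_min | exact: uB | by move=> [? ?] [? ?] _ _ /= ->].
have sps : forall p, p \in ps -> f p by move=> p /fS [x ->].
have ips : {in ps &, forall p q, f p = f q -> p = q}.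
  move=> p q /[dup] pps /fS [x -> ex] /[dup] qps /fS [y -> ey] [] /enum_rank_inj exy.
  have := congr1 (@sval _ _) exy; rewrite ex ey => [[]] /(congr1 (@bm _ _ _)) e1 /(congr1 (@bm _ _ _)) e2.
  have [p1G p2B] := psP p pps; have [q1G q2B] := psP q qps.
  have [dp _ _] := Bset_prop p2B; have [dq _ _] := Bset_prop q2B.
  rewrite !bm_toBM ?(deg_le_D G) ?(mdeg_aof G_min J_borel J_sat J_hilb) // in e1 e2.
  case: p q {pps qps ex ey exy dp dq} p1G p2B q1G q2B e1 e2 => [p1 p2] [q1 q2] /= p1G _ q1G _ e1 ->.
  congr (_, _); apply/ffunP=> i.
  case: (eqVneq i (inord 0)) => [->|ni].
    by rewrite (gen_free0 G_min J_borel J_sat p1G) (gen_free0 G_min J_borel J_sat q1G).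
  by rewrite -(aof0 d p1G ni) -(aof0 d q1G ni) e1.
have [us ss] := pmap_props ups sps ips.
rewrite -(size_allpairs pair) -/ps -ss; apply: dim_delta => // i.
rewrite mem_pmap => /mapP [p pps fp].
have [x fx ex] := fS p pps; rewrite fx in fp; case: fp => ->.
have [p1G p2B] := psP p pps.
apply/T_tangent; apply: tangent => a a' ga ga' neq ea m dv e.
have ea' : a = toBM d G (aof d p.1) by rewrite ea ex.
have e' : mquo m (mquo (mlcm (bm a) (bm a')) (bm a)) = bm (toBM d G p.2) by rewrite e ex.
exact: (key_lemma G_min J_borel J_sat J_hilb p1G p2B ga ga' neq ea' dv e').
Qed.
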